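(* Consider the algorithmic framework described below, with arbitrary parameters $\xi>1$, $\gamma\in(0,1)$, $\eta\ge 1$, in either its non-amortized or amortized variant. At all times (after the first job has arrived and after each insertion procedure), the current guess $T$ satisfies $\xi^{-1}T<\mathrm{OPT}(I^* )$, where $I^*$ is the instance consisting of all jobs arrived so far.
   Context: Problem: machines $1,\dots,m$ with speeds $s_1\ge s_2\ge\dots\ge s_m>0$; jobs arrive online, job $j$ has size $p_j>0$; the load of job $j$ on machine $i$ is $p_j/s_i$; $\mathrm{OPT}(I^* )$ is the minimum possible maximum machine load over all assignments of the jobs of $I^*$ to machines. Framework: it keeps a guess $T$, and for each machine $i$ a partition of its jobs into old jobs $\hat J_i$ and new jobs $\check J_i$; in the amortized variant also a potential $\pi_i$ per machine. Machine $i$ is saturated if $\check\ell_i:=\sum_{j\in\check J_i}p_j/s_i\ge T$, and $\eta$-eligible for job $j$ if $p_j/s_i\le \eta T$. Let $\tilde{\mathcal M}(\eta,j)$ be the set of machines that are $\eta$-eligible for $j$ and not saturated. When the first job $j_1$ arrives, set $T=p_{j_1}/s_1$ and place $j_1$ on machine 1. When a later job $j^*$ arrives, put it into a priority queue $Q$ (larger size = higher priority) and run: while $Q$ is nonempty, remove the largest job $j'$ from $Q$; then repeat: if $\tilde{\mathcal M}(\eta,j')\ne\emptyset$, choose a slowest machine $i'$ in it, move every $j\in\hat J_{i'}$ with $p_j\ge \eta^{-1}p_{j'}$ from $\hat J_{i'}$ to $\check J_{i'}$, and if $i'$ is still not saturated stop repeating; otherwise (if $\tilde{\mathcal M}(\eta,j')=\emptyset$)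 set $T:=\xi T$ and for every machine $i$ move all jobs of $\check J_i$ to $\hat J_i$ (and, in the amortized variant, set $\pi_i=0$). After a machine $i'$ is found, set $\pi:=\gamma p_{j'}$ (amortized variant: $\pi:=\gamma p_{j'}+\pi_{i'}$); go through the jobs $j\in\hat J_{i'}$ in non-increasing order of size and, whenever $p_j\le\pi$, set $\pi:=\pi-p_j$ and move $j$ from $\hat J_{i'}$ into $Q$ (i.e., remove it from machine $i'$ to be reinserted). Finally assign $j'$ to $i'$ by adding it to $\check J_{i'}$ (amortized variant: and set $\pi_{i'}:=\pi$). *)

(* Defs.v *)
From HB Require Import structures.
From mathcomp Require Import all_boot all_order all_algebra.
Set Implicit Arguments.
Unset Strict Implicit.
Unset Printing Implicit Defensive.
Import Order.TTheory GRing.Theory Num.Theory.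
Local Open Scope ring_scope.

(* Jobs are identified by their arrival index 0,1,2,...; job j has size p j.
   Machines are 'I_m (machine "1" of the paper is the ordinal 0). *)

(* Control phase of the algorithm:
   PQueue Q      : the outer while-loop with priority queue Q
                   (PQueue [::] = idle, waiting for the next arrival);
   PSearch j' Q  : inside the inner "repeat" loop for the removed job j'. *)
Inductive phase := PQueue of seq nat | PSearch of nat & seq nat.

(* Full state: guess T, old jobs \hat J_i, new jobs \check J_i, potentials
   pi_i, control phase, and number of jobs arrived so far. *)
Record state (R : Type) (m : nat) := St {
  sT   : R;
  shat : 'I_m -> seq nat;
  schk : 'I_m -> seq nat;
  spot : 'I_m -> R;
  sph  : phase;
  sn   : nat }.

Definition upd (T : Type) (m : nat) (f : 'I_m -> T) (i : 'I_m) (x : T) :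
  'I_m -> T := fun k => if k == i then x else f k.

Fixpoint evict (R : realFieldType) (p : nat -> R) (pi : R) (L : seq nat)
  : seq nat * seq nat * R :=
  match L with
  | [::] => ([::], [::], pi)
  | j :: L' =>
      if p j <= pi then
        let: (k, e, pi') := evict p (pi - p j) L' in (k, j :: e, pi')
      else
        let: (k, e, pi') := evict p pi L' in (j :: k, e, pi')
  end.

Section Algo.
Variables (R : realFieldType) (m : nat) (s : 'I_m -> R) (p : nat -> R).
Variables (xi gamma eta : R) (amortized : bool).

Definition newload (st : state R m) (i : 'I_m) : R :=
  \sum_(j <- schk st i) p j / s i.

Definition saturated (st : state R m) (i : 'I_m) : bool :=
  sT st <= newload st i.

Definition eligible (st : state R m) (j : nat) (i : 'I_m) : bool :=
  p j / s i <= eta * sT st.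

Definition Mtil (st : state R m) (j : nat) (i : 'I_m) : bool :=
  eligible st j i && ~~ saturated st i.

Definition initial (st : state R m) : Prop :=
  sn st = 1%N /\ sph st = PQueue [::] /\
  forall i : 'I_m,
    shat st i = [::] /\ spot st i = 0 /\
    (if val i == 0%N then schk st i = [:: 0%N] /\ sT st = p 0 / s i
     else schk st i = [::]).

Inductive step : state R m -> state R m -> Prop :=
  | step_arrive T hat chk pot n :
      step (St T hat chk pot (PQueue [::]) n)
           (St T hat chk pot (PQueue [:: n]) n.+1)
  | step_pop T hat chk pot Q n j :
      j \in Q -> (forall j0, j0 \in Q -> p j0 <= p j) ->
      step (St T hat chk pot (PQueue Q) n)
           (St T hat chk pot (PSearch j (rem j Q)) n)
  (* \tilde M nonempty: slowest machine i, move big old jobs to new jobs;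
     i became saturated, so repeat *)
  | step_move_repeat st j Q i :
      sph st = PSearch j Q ->
      Mtil st j i -> (forall k, Mtil st j k -> s i <= s k) ->
      let big := [seq x <- shat st i | eta^-1 * p j <= p x] in
      let small := [seq x <- shat st i | ~~ (eta^-1 * p j <= p x)] in
      let st1 := St (sT st) (upd (shat st) i small)
                    (upd (schk st) i (schk st i ++ big)) (spot st)
                    (PSearch j Q) (sn st) in
      saturated st1 i ->
      step st st1
  (* \tilde M nonempty: slowest machine i, move big old jobs; i still not
     saturated, so i' := i is found; evict greedily and assign j' to i *)
  | step_move_found st j Q i L :
      sph st = PSearch j Q ->
      Mtil st j i -> (forall k, Mtil st j k -> s i <= s k) ->
      let big := [seq x <- shat st i | eta^-1 * p j <= p x] in
      let small := [seq x <- shat st i | ~~ (eta^-1 * p j <= p x)] in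
      let st1 := St (sT st) (upd (shat st) i small)
                    (upd (schk st) i (schk st i ++ big)) (spot st)
                    (PSearch j Q) (sn st) in
      ~~ saturated st1 i ->
      perm_eq L small -> sorted (fun a b => p b <= p a) L ->
      let pi0 := gamma * p j + (if amortized then spot st i else 0) in
      let res := evict p pi0 L in
      step st (St (sT st) (upd (shat st) i res.1.1)
                  (upd (schk st1) i (schk st1 i ++ [:: j]))
                  (if amortized then upd (spot st) i res.2 else spot st)
                  (PQueue (Q ++ res.1.2)) (sn st))
  | step_raise st j Q :
      sph st = PSearch j Q -> (forall k, ~~ Mtil st j k) ->
      step st (St (xi * sT st) (fun k => shat st k ++ schk st k)
                  (fun _ => [::])
                  (if amortized then (fun _ => 0) else spot st)
                  (PSearch j Q) (sn st)).

Inductive reachable : state R m -> Prop :=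
  | reach_init st : initial st -> reachable st
  | reach_step st st' : reachable st -> step st st' -> reachable st'.

End Algo.

Definition makespan (R : realFieldType) (m n : nat) (s : 'I_m -> R)
  (p : nat -> R) (a : {ffun 'I_n -> 'I_m}) : R :=
  \big[Order.max/0]_(i : 'I_m) \sum_(j : 'I_n | a j == i) p j / s i.

(* The neutral element of the min is the
   maximum makespan, which is >= every makespan, so this is exactly the
   minimum whenever some assignment exists. *)
Definition OPT (R : realFieldType) (m : nat) (s : 'I_m -> R) (p : nat -> R)
  (n : nat) : R :=
  \big[Order.min/ \big[Order.max/0]_(a : {ffun 'I_n -> 'I_m}) makespan s p a]_(a : {ffun 'I_n -> 'I_m})
     makespan s p a.

(* Main.v *)
Require Import Defs.
From HB Require Import structures.
From mathcomp Require Import all_boot all_order all_algebra.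
From mathcomp Require Import zify ring lra.
Set Implicit Arguments. Unset Strict Implicit. Unset Printing Implicit Defensive.
Import Order.TTheory GRing.Theory Num.Theory.
Local Open Scope ring_scope.

Section Proof.
Variables (R : realFieldType) (m : nat) (s : 'I_m -> R) (p : nat -> R).
Variables (xi gamma eta : R) (amortized : bool).
Hypothesis m_gt0 : (0 < m)%N.
Hypothesis s_gt0 : forall i, 0 < s i.
Hypothesis s_mono : forall i j : 'I_m, (i <= j)%N -> s j <= s i.
Hypothesis p_gt0 : forall j, 0 < p j.
Hypothesis xi_gt1 : 1 < xi.
Hypothesis eta_ge1 : 1 <= eta.

Definition phl ph := match ph with PQueue Q => Q | PSearch j Q => j :: Q end.
Definition cnt (st : state R m) (x : nat) : nat :=
  (\sum_(i < m) (count_mem x (shat st i) + count_mem x (schk st i))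
     + count_mem x (phl (sph st)))%N.
Definition nl (chk : 'I_m -> seq nat) i := \sum_(j <- chk i) p j / s i.
Definition Pinv T (chk : 'I_m -> seq nat) := forall i x u,
  x \in chk i -> s u < s i -> ~~ (T <= nl chk u) -> T < p x / s u.
Definition load (a : nat -> 'I_m) n i := \sum_(x < n | a x == i) p x / s i.
Definition LB c n := forall a : nat -> 'I_m, exists i, c < load a n i.
Definition Inv (st : state R m) :=
  [/\ 0 < sT st, forall x, cnt st x = nat_of_bool (x < sn st)%N,
      Pinv (sT st) (schk st) & LB (xi^-1 * sT st) (sn st)].

Lemma count_split (P : pred nat) l x :
  (count_mem x [seq y <- l | P y] + count_mem x [seq y <- l | ~~ P y] = count_mem x l)%N.
Proof. elim: l => //= y l IH; case: (P y) => /=; lia. Qed.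

Lemma evict_count pi L x :
  (count_mem x (evict p pi L).1.1 + count_mem x (evict p pi L).1.2 = count_mem x L)%N.
Proof.
elim: L pi => [|y L IH] pi //=.
case: ifP => _.
  case E: (evict p (pi - p y) L) => [[k e] pi'] /=.
  have := IH (pi - p y); rewrite E /=; lia.
case E: (evict p pi L) => [[k e] pi'] /=.
have := IH pi; rewrite E /=; lia.
Qed.

Lemma sum_upd_nat (F G : 'I_m -> nat) i : (forall k, k != i -> F k = G k) ->
  (\sum_(k < m) F k + G i = \sum_(k < m) G k + F i)%N.
Proof.
move=> H; rewrite [(\sum_(k < m) F k)%N](bigD1 i) //= [(\sum_(k < m) G k)%N](bigD1 i) //=.
rewrite addnAC [in RHS]addnAC [(G i + F i)%N]addnC; congr (_ + _); exact: eq_bigr.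
Qed.

Lemma nl_ge0 chk k : 0 <= nl chk k.
Proof. apply: sumr_ge0 => y _; apply: divr_ge0; apply: ltW; [exact: p_gt0|exact: s_gt0]. Qed.

Lemma nl_upd chk i extra k : nl chk k <= nl (upd chk i (chk i ++ extra)) k.
Proof.
rewrite /nl /upd; case: eqP => [->|_] //.
rewrite big_cat /= lerDl; apply: sumr_ge0 => y _; apply: divr_ge0; apply: ltW;
  [exact: p_gt0|exact: s_gt0].
Qed.

Lemma Pinv_ext T chk i extra j : 0 < T -> Pinv T chk ->
  (forall k, p j / s k <= eta * T -> ~~ (T <= nl chk k) -> s i <= s k) ->
  (forall x, x \in extra -> p j <= eta * p x) ->
  Pinv T (upd chk i (chk i ++ extra)).
Proof.
move=> T0 HP Hs He i0 x u.
have Hsat : ~~ (T <= nl (upd chk i (chk i ++ extra)) u) -> ~~ (T <= nl chk u).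
  by apply: contra => h; apply: le_trans h (nl_upd _ _ _ _).
rewrite {1}/upd; case: eqP => [-> | _]; last by move=> hx hs /Hsat; exact: (HP _ _ _ hx hs).
rewrite mem_cat => /orP [hx hs /Hsat | hx hs /Hsat hu]; first exact: (HP _ _ _ hx hs).
have eta0 : 0 < eta by apply: lt_le_trans eta_ge1.
case: (leP (p j / s u) (eta * T)) => h.
  by have := Hs u h hu; rewrite leNgt hs.
rewrite -(ltr_pM2l eta0); apply: lt_le_trans h _.
rewrite mulrA ler_pM2r ?invr_gt0 //; exact: He.
Qed.

Lemma Pinv_eq T f g : Pinv T f -> (forall k, f k = g k) -> Pinv T g.
Proof.
move=> H E i x u; rewrite -E => hx hs; rewrite /nl -E; exact: (H _ _ _ hx hs).
Qed.


Lemma sum_count n l (F : nat -> R) : all (fun y => y < n)%N l ->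
  \sum_(y <- l) F y = \sum_(x < n) (count_mem (val x) l)%:R * F x.
Proof.
elim: l => [|y l IH] /=.
  by move=> _; rewrite big_nil big1 // => x _; rewrite mul0r.
case/andP => hy hl; rewrite big_cons IH //.
rewrite [RHS](eq_bigr (fun x : 'I_n => (y == val x)%:R * F x + (count_mem (val x) l)%:R * F x));
  last by move=> x _; rewrite /= natrD mulrDl.
rewrite big_split /=; congr (_ + _).
rewrite (bigD1 (Ordinal hy)) //= eqxx mul1r big1 ?addr0 // => x hx.
case: eqP => [E|]; last by rewrite mul0r.
move: hx; have -> : x = Ordinal hy by apply: val_inj; rewrite /= E.
by rewrite eqxx.
Qed.

Lemma cnt_chk st k x : (count_mem x (schk st k) <= cnt st x)%N.
Proof. rewrite /cnt (bigD1 k) //=; lia. Qed.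

Lemma cnt_ge st j Q x (P : pred 'I_m) : sph st = PSearch j Q ->
  ((j == x) + \sum_(k < m | P k) count_mem x (schk st k) <= cnt st x)%N.
Proof.
move=> Hph; rewrite /cnt Hph /=.
have : (\sum_(k < m | P k) count_mem x (schk st k) <=
        \sum_(k < m) (count_mem x (shat st k) + count_mem x (schk st k)))%N.
  rewrite big_mkcond /=; apply: leq_sum => k _; case: (P k) => //; lia.
move=> h; rewrite addnCA leq_add2l; exact: leq_trans h (leq_addr _ _).
Qed.

Lemma load_ge a n (xo : 'I_n) : p xo / s (a (val xo)) <= load a n (a xo).
Proof.
rewrite /load (bigD1 xo) //= lerDl; apply: sumr_ge0 => y _; apply: divr_ge0;
  apply: ltW; [exact: p_gt0|exact: s_gt0].
Qed.

Lemma pos_sum_ex (P : pred 'I_m) (f : 'I_m -> nat) :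
  (0 < \sum_(k < m | P k) f k)%N -> exists k, P k && (0 < f k)%N.
Proof.
move=> H; apply/existsP; apply: contraLR H; rewrite negb_exists => /forallP H.
rewrite big1 // => k Pk; have := H k; rewrite Pk /=; lia.
Qed.

Lemma raise_LB st j Q : Inv st -> sph st = PSearch j Q ->
  (forall k, ~~ Mtil s p eta st j k) -> LB (sT st) (sn st).
Proof.
move=> [T0 Hc HP _] Hph HM a.
set T := sT st; set n := sn st.
case: (boolP [exists i, T < load a n i]) => [/existsP [i hi] | hne]; first by exists i.
exfalso.
have Hle : forall i, load a n i <= T.
  by move=> i; move: hne; rewrite negb_exists => /forallP /(_ i); rewrite -leNgt.
pose A := fun i : 'I_m => [forall u, ~~ saturated s p st u ==> (s u < s i)].
have satA : forall k, A k -> saturated s p st k.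
  move=> k /forallP /(_ k); apply: contraLR => h; rewrite negb_imply h /= ltxx //.
have F2 : forall u, ~~ saturated s p st u -> T < p j / s u.
  move=> u hu; have := HM u; rewrite /Mtil hu andbT /eligible -ltNge => h.
  apply: le_lt_trans h; apply: ler_peMl => //; exact: ltW.
have xn : forall x, (0 < cnt st x)%N -> (x < n)%N.
  by move=> x; rewrite Hc; case: (x < n)%N.
have F3 : forall xo : 'I_n, (j == xo) || [exists k, A k && (val xo \in schk st k)] ->
    A (a xo).
  move=> xo H; apply: contraT; rewrite negb_forall => /existsP [u].
  rewrite negb_imply -leNgt => /andP [hu hle].
  have hT : T < p xo / s u.
    case/orP: H => [/eqP <- | /existsP [k /andP [Ak hx]]]; first exact: F2.
    apply: (HP k xo u hx) => //.
    by move: Ak => /forallP /(_ u); rewrite hu.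
  have hL : p xo / s u <= load a n (a xo).
    apply: le_trans (load_ge a xo).
    rewrite ler_wpM2l ?(ltW (p_gt0 _)) // lef_pV2 ?posrE //; exact: s_gt0.
  by have := lt_le_trans hT hL; rewrite ltNge Hle.
pose S := fun x : 'I_n => (\sum_(k < m | A k) count_mem (val x) (schk st k))%N.
pose c := fun x : 'I_n => ((j == val x) + S x)%N.
have E1 : \sum_(i < m | A i) \sum_(x < n | a x == i) p x <= \sum_(i < m | A i) T * s i.
  apply: ler_sum => i _; have := Hle i; rewrite /load -mulr_suml ler_pdivrMr //.
have E2 : \sum_(i < m | A i) \sum_(x < n | a x == i) p x = \sum_(x < n | A (a x)) p x.
  rewrite [RHS](partition_big (fun x : 'I_n => a x) A) //.
  apply: eq_bigr => i Ai; apply: eq_bigl => x; case: eqP => [->|]; by rewrite ?Ai ?andbF.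
have E3 : \sum_(x < n) (c x)%:R * p x <= \sum_(x < n | A (a x)) p x.
  rewrite [X in _ <= X]big_mkcond; apply: ler_sum => x _.
  have hc1 : (c x <= 1)%N.
    have := cnt_ge x A Hph; have := Hc x; rewrite /c /S; case: (x < n)%N => /= -> h //; exact: leq_trans h _.
  case hc0 : (c x == 0)%N.
    rewrite (eqP hc0) mul0r; case: ifP => // _; exact: ltW.
  have -> : c x = 1%N by lia.
  rewrite mul1r ifT //; apply: F3.
  case hj: (j == val x); first by [].
  have hpos : (0 < S x)%N by move: hc0 hc1; rewrite /c hj /=; lia.
  have [k /andP [Ak hk]] := @pos_sum_ex A (fun k => count_mem (val x) (schk st k)) hpos.
  by apply/existsP; exists k; rewrite Ak /= -has_pred1 has_count.
have E4 : \sum_(x < n) (c x)%:R * p x =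
          p j + \sum_(k < m | A k) \sum_(y <- schk st k) p y.
  have jn : (j < n)%N.
    apply: xn; have := cnt_ge j (pred0) Hph; rewrite eqxx; lia.
  rewrite (eq_bigr (fun x : 'I_n => (count_mem (val x) [:: j])%:R * p x +
             \sum_(k < m | A k) (count_mem (val x) (schk st k))%:R * p x)); last first.
    by move=> x _; rewrite /c natrD mulrDl natr_sum mulr_suml /= addn0.
  rewrite big_split /= -(sum_count p (l := [:: j])) /= ?jn // big_cons big_nil addr0.
  congr (_ + _); rewrite exchange_big /=; apply: eq_bigr => k _.
  rewrite (sum_count p (n := n)) //; apply/allP => y hy; apply: xn.
  apply: leq_trans (cnt_chk st k y); rewrite -has_pred1 has_count in hy; done.
have E5 : \sum_(i < m | A i) T * s i <= \sum_(k < m | A k) \sum_(y <- schk st k) p y.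
  apply: ler_sum => k Ak; have := satA k Ak; rewrite /saturated /newload -mulr_suml.
  by rewrite ler_pdivlMr.
have : p j + \sum_(i < m | A i) T * s i <= \sum_(i < m | A i) T * s i.
  rewrite -E2 in E3; apply: le_trans E1.
  apply: le_trans E3; rewrite E4 lerD2l //.
rewrite gerDr leNgt p_gt0 //.
Qed.

Lemma load_S a n i : load a n i <= load a n.+1 i.
Proof.
rewrite /load [X in _ <= X]big_mkcond big_ord_recr /= -big_mkcond /= lerDl.
case: ifP => _ //; apply: divr_ge0; apply: ltW; [exact: p_gt0|exact: s_gt0].
Qed.

Lemma LB_S c n : LB c n -> LB c n.+1.
Proof. move=> H a; have [i hi] := H a; exists i; exact: lt_le_trans hi (load_S a n i). Qed.

Lemma slow_cond st j i : (forall k, Mtil s p eta st j k -> s i <= s k) ->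
  forall k, p j / s k <= eta * sT st -> ~~ (sT st <= nl (schk st) k) -> s i <= s k.
Proof. by move=> H k h1 h2; apply: H; rewrite /Mtil /eligible h1. Qed.

Lemma big_cond j (l : seq nat) x : x \in [seq y <- l | eta^-1 * p j <= p y] -> p j <= eta * p x.
Proof.
rewrite mem_filter => /andP [h _]; rewrite -ler_pdivrMl //; exact: lt_le_trans eta_ge1.
Qed.

Lemma step_inv st st' : step s p xi gamma eta amortized st st' -> Inv st -> Inv st'.
Proof.
case => [T hat chk pot n | T hat chk pot Q n j hj hmax
  | {}st j Q i Hph HMi Hslow big small st1 Hsat
  | {}st j Q i L Hph HMi Hslow big small st1 Hsat HL Hsort pi0 res
  | {}st j Q Hph HM]; move=> [T0 Hc HP HLB].
- split => //=; last exact: LB_S.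
  move=> x; have := Hc x; rewrite /cnt /= => H; rewrite addn0 in H.
  rewrite addnA H; case: (ltngtP x n) => h; lia.
- split => //=; move=> x; have := Hc x; rewrite /cnt /= => <-; congr (_ + _).
  by move/permP: (perm_to_rem hj) => /(_ (pred1 x)) /= ->.
- split => //=.
  + move=> x; have := Hc x; rewrite /cnt Hph /= => <-; congr (_ + _).
    apply: eq_bigr => k _; rewrite /upd; case: eqP => [->|_] //.
    rewrite count_cat /small /big.
    rewrite -(count_split (fun y => eta^-1 * p j <= p y) (shat st i) x) addnCA addnC.
    congr (_ + _); exact: addnC.
  + exact: (Pinv_ext T0 HP (slow_cond Hslow) (@big_cond j _)).
- split => //=.
  + move=> x; have := Hc x; rewrite /cnt Hph /= => <-.
    pose F := fun k => (count_mem x (upd (shat st) i res.1.1 k) +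
                        count_mem x (upd (schk st1) i (schk st1 i ++ [:: j]) k))%N.
    pose G := fun k => (count_mem x (shat st k) + count_mem x (schk st k))%N.
    have Hext : forall k, k != i -> F k = G k.
      by move=> k hk; rewrite /F /G /st1 /upd /= (negbTE hk).
    have E := @sum_upd_nat F G i Hext.
    have K1 : (count_mem x big + count_mem x small = count_mem x (shat st i))%N.
      by rewrite /big /small; exact: count_split.
    have K2 : (count_mem x res.1.1 + count_mem x res.1.2 = count_mem x L)%N.
      exact: evict_count.
    have K3 : count_mem x L = count_mem x small by move/permP: HL => /(_ (pred1 x)).
    have Fi : F i = (count_mem x res.1.1 + count_mem x (schk st i) + count_mem x big + (j == x))%N.
      by rewrite /F /st1 /upd /= eqxx !count_cat /= addn0 !addnA.
    have Gi : G i = (count_mem x (shat st i) + count_mem x (schk st i))%N by [].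
    change (\sum_(k < m) F k + count_mem x (Q ++ res.1.2) =
            \sum_(k < m) G k + ((j == x) + count_mem x Q))%N.
    rewrite count_cat; move: E K1 K2 K3 Fi Gi.
    clearbody F G; clearbody res; clearbody st1 pi0; clearbody big small.
    lia.
  + have H1 : Pinv (sT st) (upd (schk st) i (schk st i ++ (big ++ [:: j]))).
      apply: (Pinv_ext T0 HP (slow_cond Hslow)) => x.
      rewrite mem_cat => /orP [hx | ]; first exact: (big_cond hx).
      rewrite inE => /eqP ->; rewrite ler_peMl //; exact: ltW.
    apply: (Pinv_eq H1) => k; rewrite /upd; case: eqP => // _.
    by rewrite eqxx catA.
- split => //=.
  + apply: mulr_gt0 => //; exact: lt_trans xi_gt1.
  + move=> x; have := Hc x; rewrite /cnt Hph /= => <-; congr (_ + _).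
    by apply: eq_bigr => k _; rewrite count_cat addn0.
  + rewrite mulrA mulVf ?mul1r ?gt_eqF //; last exact: lt_trans xi_gt1.
    exact: (raise_LB (And4 T0 Hc HP HLB) Hph HM).
Qed.

Lemma initial_inv st : initial s p st -> Inv st.
Proof.
case=> Hn [Hph Hi].
pose i0 : 'I_m := Ordinal m_gt0.
have [_ [_ H0]] := Hi i0; rewrite /= in H0; case: H0 => Hc0 HT.
have Hoth : forall k, k != i0 -> schk st k = [::].
  move=> k hk; have [_ [_]] := Hi k; case: eqP => [hv|_] //.
  by move: hk; have -> : k = i0 by apply: val_inj.
have Hhat k : shat st k = [::] by case: (Hi k).
have T0 : 0 < sT st by rewrite HT divr_gt0.
split => //.
- move=> x; rewrite /cnt Hph Hn /= addn0 (bigD1 i0) //= Hhat Hc0 /= big1 ?addn0.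
    by case: x.
  by move=> k hk; rewrite Hhat Hoth.
- move=> i x u hx hs hu; case: (eqVneq i i0) => [E|hne]; last by rewrite Hoth in hx.
  subst i; rewrite Hc0 inE in hx; move/eqP: hx => ->.
  rewrite HT ltr_pM2l // ltf_pV2 ?posrE //.
- move=> a; exists (a 0%N); rewrite Hn.
  apply: lt_le_trans (load_ge a (@ord0 0)) => /=.
  have xi0 : 0 < xi by exact: lt_trans xi_gt1.
  apply: (@lt_le_trans _ _ (sT st)); first by rewrite ltr_pdivrMl // ltr_pMl.
  rewrite HT ler_wpM2l ?(ltW (p_gt0 _)) // lef_pV2 ?posrE //; apply: s_mono => //.
Qed.

Lemma reach_inv st : reachable s p xi gamma eta amortized st -> Inv st.
Proof.
elim => [st0 /initial_inv // | st0 st1 _ IH Hs]; exact: step_inv Hs IH.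
Qed.

Lemma le_bmax (I : eqType) (r : seq I) (F : I -> R) x0 i :
  i \in r -> F i <= \big[Order.max/x0]_(k <- r) F k.
Proof.
elim: r => //= y r IH; rewrite inE big_cons le_max => /orP [/eqP -> | /IH ->];
  by rewrite ?lexx ?orbT.
Qed.

Lemma LB_OPT c n : LB c n -> c < OPT s p n.
Proof.
move=> H.
pose i0 : 'I_m := Ordinal m_gt0.
have Hb : forall b : {ffun 'I_n -> 'I_m}, c < makespan s p b.
  move=> b; pose a := fun x : nat => if insub x is Some o then b o else i0.
  have [i hi] := H a.
  have E : load a n i = \sum_(j : 'I_n | b j == i) p j / s i.
    by rewrite /load; apply: eq_bigl => x; rewrite /a valK.
  rewrite E in hi; apply: lt_le_trans hi _; rewrite /makespan.
  exact: (le_bmax (fun k => \sum_(j : 'I_n | b j == k) p j / s k) 0 (mem_index_enum i)).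
rewrite /OPT; apply: (big_ind (fun v => c < v)).
- apply: lt_le_trans (Hb [ffun=> i0]) _.
  exact: (le_bmax (fun b => makespan s p b) 0 (mem_index_enum _)).
- by move=> x y hx hy; rewrite lt_min hx hy.
- by move=> b _; exact: Hb.
Qed.

End Proof.

Theorem lemma3 (R : realFieldType) (m : nat) (s : 'I_m -> R) (p : nat -> R)
  (xi gamma eta : R) (amortized : bool) :
  (0 < m)%N ->
  (forall i : 'I_m, 0 < s i) ->
  (forall i j : 'I_m, (i <= j)%N -> s j <= s i) ->
  (forall j, 0 < p j) ->
  1 < xi -> 0 < gamma < 1 -> 1 <= eta ->
  forall st : state R m,
    reachable s p xi gamma eta amortized st ->
    sph st = PQueue [::] ->
    xi^-1 * sT st < OPT s p (sn st).
Proof.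
move=> hm hs hmono hp hxi _ heta st hr _.
have [_ _ _ HLB] := reach_inv hm hs hmono hp hxi heta hr.
by apply: LB_OPT HLB.
Qed.
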